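(* Let $x_0<\dots<x_n$ and $\hat x_0<\dots<\hat x_n$ be real numbers with $\hat x_0=x_0$, $\hat x_n=x_n$, let $z_k=z_k(\mathbf{x},\hat{\mathbf{x}})$, $\hat c_k:=(\hat x_{k-1}+\hat x_k)/2$, and for $1\le k\le n$, $0\le j\le n$ let $a_{k,j}:=(z_j-P_{\mathbf{z}}(\hat c_k))\,\ell_j(\hat c_k)$. Let $L\ge0$ and let $\mathbf{y}\in\mathbb{R}^{n+1}$ satisfy $|y_j-y_{j-1}|\le L(\hat x_j-\hat x_{j-1})$ for $1\le j\le n$. Then for each $1\le k\le n$, \[ |E(\hat c_k;\mathbf{y},\mathbf{z})|\le L\sum_{i=1}^n(\hat x_i-\hat x_{i-1})\Bigl|\sum_{j=i}^n a_{k,j}\Bigr|. \]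
   Context: $\lambda_k(\mathbf{x}):=1/\prod_{j\neq k}(x_k-x_j)$; $z_k(\mathbf{x},\hat{\mathbf{x}}):=(\lambda_k(\mathbf{x})-\lambda_k(\hat{\mathbf{x}}))/\lambda_k(\hat{\mathbf{x}})$. $\ell_j$ is the $j$-th Lagrange polynomial for the nodes $\hat{\mathbf{x}}$. For $\mathbf{v}\in\mathbb{R}^{n+1}$, $P_{\mathbf{v}}$ is the polynomial of degree $\le n$ with $P_{\mathbf{v}}(\hat x_k)=v_k$; $E(t;\mathbf{y},\mathbf{z}):=P_{\mathbf{y}\mathbf{z}}(t)-P_{\mathbf{y}}(t)P_{\mathbf{z}}(t)$ with $(\mathbf{yz})_k=y_kz_k$. *)

(* Defs.v *)
From mathcomp Require Import all_boot all_order all_algebra.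
Set Implicit Arguments. Unset Strict Implicit. Unset Printing Implicit Defensive.
Import Order.TTheory GRing.Theory Num.Theory.
Local Open Scope ring_scope.

Definition lam (R : fieldType) (n : nat) (x : 'I_n.+1 -> R) (k : 'I_n.+1) : R :=
  (\prod_(j < n.+1 | j != k) (x k - x j))^-1.

Definition zk (R : fieldType) (n : nat) (x xh : 'I_n.+1 -> R) (k : 'I_n.+1) : R :=
  (lam x k - lam xh k) / lam xh k.

Definition lagr (R : fieldType) (n : nat) (xh : 'I_n.+1 -> R) (j : 'I_n.+1) (t : R) : R :=
  \prod_(m < n.+1 | m != j) ((t - xh m) / (xh j - xh m)).

Definition Pint (R : fieldType) (n : nat) (xh : 'I_n.+1 -> R) (v : 'I_n.+1 -> R) (t : R) : R :=
  \sum_(j < n.+1) v j * lagr xh j t.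

Definition Eerr (R : fieldType) (n : nat) (xh : 'I_n.+1 -> R) (y z : 'I_n.+1 -> R) (t : R) : R :=
  Pint xh (fun k => y k * z k) t - Pint xh y t * Pint xh z t.

(* Main.v *)
Require Import Defs.
From mathcomp Require Import all_boot all_order all_algebra.
Import Order.TTheory GRing.Theory Num.Theory.
Local Open Scope ring_scope.
From mathcomp Require Import ring.

Section S.
Variable R : realFieldType.

Lemma tele (Y : nat -> R) N :
  \sum_(0 <= i < N.+1 | (0 < i)%N) (Y i - Y i.-1) = Y N - Y 0%N.
Proof.
elim: N => [|N IH]; first by rewrite big_mkcond big_nat1 /= subrr.
rewrite big_mkcond big_nat_recr //= -big_mkcond IH /=.
by rewrite addrC addrA subrK.
Qed.

Lemma abel (Y A : nat -> R) N :
  \sum_(0 <= i < N | (0 < i)%N) (Y i - Y i.-1) * \sum_(0 <= j < N | (i <= j)%N) A j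
  = \sum_(0 <= j < N) (Y j - Y 0%N) * A j.
Proof.
elim: N => [|N IH]; first by rewrite !big_geq.
rewrite big_nat_recr //= -IH.
have -> : \sum_(0 <= i < N.+1 | (0 < i)%N)
     (Y i - Y i.-1) * \sum_(0 <= j < N.+1 | (i <= j)%N) A j =
  \sum_(0 <= i < N.+1 | (0 < i)%N)
     ((Y i - Y i.-1) * \sum_(0 <= j < N | (i <= j)%N) A j + (Y i - Y i.-1) * A N).
  rewrite big_nat_cond [RHS]big_nat_cond; apply: eq_bigr => i /andP[/andP[_ hi] _].
  by rewrite (big_mkcond (fun j => (i <= j)%N)) big_nat_recr //= -big_mkcond -ltnS hi mulrDr.
rewrite big_split /= -big_distrl /= tele.
congr (_ + _).
rewrite (big_mkcond (fun i => (0 < i)%N)) big_nat_recr //= -big_mkcond.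
have -> : \sum_(0 <= j < N | (N <= j)%N) A j = 0.
  by rewrite big_nat_cond big1 // => j /andP[/andP[_ h1] h2]; rewrite leqNgt h1 in h2.
by rewrite mulr0 if_same addr0.
Qed.
End S.

Lemma lagr_node (R : fieldType) n (xh : 'I_n.+1 -> R) :
  injective xh -> forall j k, lagr xh j (xh k) = (j == k)%:R.
Proof.
move=> inj j k; rewrite /lagr; case: eqP => [<-|/eqP jk].
  rewrite big1 // => m mj; rewrite divff // subr_eq0; apply/eqP => h.
  by move: mj; rewrite (inj _ _ h) eqxx.
by rewrite (bigD1 k) 1?eq_sym //= subrr mul0r mul0r.
Qed.

Lemma sum_lagr (R : fieldType) n (xh : 'I_n.+1 -> R) :
  injective xh -> forall t, \sum_(j < n.+1) lagr xh j t = 1.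
Proof.
move=> inj t.
pose q : {poly R} := \sum_(j < n.+1) \prod_(m < n.+1 | m != j)
   (('X - (xh m)%:P) * ((xh j - xh m)^-1)%:P) - 1.
have qE u : q.[u] = \sum_(j < n.+1) lagr xh j u - 1.
  rewrite /q hornerD hornerN hornerC horner_sum; congr (_ - _).
  apply: eq_bigr => j _; rewrite horner_prod; apply: eq_bigr => m _.
  by rewrite hornerM hornerXsubC hornerC.
have q0 : q = 0.
  apply: (@roots_geq_poly_eq0 _ q [seq xh i | i <- enum 'I_n.+1]).
  - apply/allP => u /mapP[i _ ->]; rewrite /root qE.
    rewrite (bigD1 i) //= big1 => [|j ji]; last by rewrite lagr_node // (negbTE ji).
    by rewrite lagr_node // eqxx addr0 subrr.
  - by rewrite map_inj_uniq // enum_uniq.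
  - rewrite size_map size_enum_ord /q.
    apply: leq_trans (size_polyD _ _) _; rewrite size_polyN size_poly1 geq_max.
    apply/andP; split; last by [].
    apply: leq_trans (size_sum _ _ _) _; apply/bigmax_leqP => j _.
    apply: leq_trans (size_poly_prod_leq _ _) _.
    have hs : (\sum_(m < n.+1 | m != j) size (('X - (xh m)%:P) * ((xh j - xh m)^-1)%:P)%R
               <= \sum_(m < n.+1 | m != j) 2)%N.
      apply: leq_sum => m _; apply: leq_trans (size_polyMleq _ _) _.
      by rewrite size_XsubC; have := size_polyC_leq1 (xh j - xh m)^-1; case: (size _) => [|[]].
    apply: leq_trans (leq_sub2r _ (hs : (_ < _.+1)%N)) _.
    rewrite sum_nat_const.
    have -> : #|[pred m : 'I_n.+1 | m != j]| = n.
      by have := cardC1 j; rewrite card_ord.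
    by rewrite muln2 -addnn -addSn addnK.
have := qE t; rewrite q0 horner0 => /eqP; rewrite eq_sym subr_eq0 => /eqP //.
Qed.

Theorem lemma4 (R : realFieldType) (n : nat) (x xh y : 'I_n.+1 -> R) (L : R) :
  (forall i j : 'I_n.+1, (i < j)%N -> x i < x j) ->
  (forall i j : 'I_n.+1, (i < j)%N -> xh i < xh j) ->
  xh ord0 = x ord0 -> xh ord_max = x ord_max ->
  0 <= L ->
  (forall j : 'I_n.+1, (0 < j)%N ->
     `|y j - y (inord j.-1)| <= L * (xh j - xh (inord j.-1))) ->
  forall k : 'I_n.+1, (0 < k)%N ->
    let z := zk x xh in
    let c := (xh (inord k.-1) + xh k) / 2 in
    let a := fun j : 'I_n.+1 => (z j - Pint xh z c) * lagr xh j c in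
    `|Eerr xh y z c| <=
      L * \sum_(i < n.+1 | (0 < i)%N)
            (xh i - xh (inord i.-1)) * `|\sum_(j < n.+1 | (i <= j)%N) a j|.
Proof.
intros hx hxh h0 hn hL hy k hk; cbv zeta.
set z := zk x xh. set c := (xh (inord k.-1) + xh k) / 2.
set a := fun j : 'I_n.+1 => (z j - Pint xh z c) * lagr xh j c.
have inj : injective xh.
  move=> i j h; case: (ltngtP i j) => [h'|h'|/val_inj] //.
    by have := hxh _ _ h'; rewrite h ltxx.
  by have := hxh _ _ h'; rewrite h ltxx.
have hE : Eerr xh y z c = \sum_(j < n.+1) y j * a j.
  rewrite /Eerr /a /Pint mulr_suml -sumrB; apply: eq_bigr => j _; ring.
have hA : \sum_(j < n.+1) a j = 0.
  rewrite /a; under eq_bigr do rewrite mulrBl.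
  by rewrite sumrB -mulr_sumr sum_lagr // mulr1 subrr.
have hE2 : Eerr xh y z c = \sum_(j < n.+1) (y j - y ord0) * a j.
  rewrite hE; under [RHS]eq_bigr do rewrite mulrBl.
  by rewrite sumrB -mulr_sumr hA mulr0 subr0.
pose Y i := y (inord i); pose A i := a (inord i).
have i0 : inord 0 = ord0 :> 'I_n.+1 by apply: val_inj; rewrite /= inordK.
have c1 : \sum_(j < n.+1) (y j - y ord0) * a j
          = \sum_(0 <= j < n.+1) (Y j - Y 0%N) * A j.
  rewrite big_mkord; apply: eq_bigr => j _; by rewrite /Y /A inord_val i0.
have c2 : \sum_(i < n.+1 | (0 < i)%N)
            (xh i - xh (inord i.-1)) * `|\sum_(j < n.+1 | (i <= j)%N) a j|
        = \sum_(0 <= i < n.+1 | (0 < i)%N)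
            (xh (inord i) - xh (inord i.-1)) * `|\sum_(0 <= j < n.+1 | (i <= j)%N) A j|.
  rewrite big_mkord; apply: eq_bigr => i _; rewrite inord_val; congr (_ * `|_|).
  by rewrite big_mkord; apply: eq_bigr => j _; rewrite /A inord_val.
rewrite hE2 c1 -abel c2 mulr_sumr.
apply: le_trans (ler_norm_sum _ _ _) _.
rewrite big_nat_cond [X in _ <= X]big_nat_cond; apply: ler_sum => i /andP[/andP[_ hi] h0i].
rewrite normrM mulrA ler_wpM2r //.
have := hy (inord i); rewrite inordK //; apply; by [].
Qed.
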